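(* For all 5-complex numbers $u',u''$, the modulus of their product satisfies $|u'u''|\leq \sqrt{5}\,|u'|\,|u''|$.
   Context: A 5-complex number is an expression $u=x_0+h_1x_1+h_2x_2+h_3x_3+h_4x_4$ with $x_0,\dots,x_4\in\mathbb{R}$. Addition is componentwise. Multiplication is the commutative, associative, bilinear product determined by $h_jh_k=h_{(j+k)\bmod 5}$ with $h_0=1$; explicitly, if $u=\sum_j h_jx_j$ and $u'=\sum_j h_jx'_j$, then the coefficient of $h_l$ in $uu'$ is $\sum_{j+k\equiv l \pmod 5} x_jx'_k$. The modulus of $u$ is $|u|=d=(x_0^2+x_1^2+x_2^2+x_3^2+x_4^2)^{1/2}$. *)

(* Defs.v *)
From mathcomp Require Import all_boot all_order all_algebra.
Set Implicit Arguments. Unset Strict Implicit. Unset Printing Implicit Defensive.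
Import Order.TTheory GRing.Theory Num.Theory.
Local Open Scope ring_scope.

(* A 5-complex number u = x_0 + h_1 x_1 + ... + h_4 x_4 is represented by its
   coefficient family x : 'I_5 -> R (x j = coefficient of h_j, h_0 = 1). *)
Definition cplx5 (R : rcfType) := 'I_5 -> R.

Definition mul5 (R : rcfType) (u v : cplx5 R) : cplx5 R :=
  fun l => \sum_(j < 5) \sum_(k < 5 | ((j + k) %% 5 == l)%N) u j * v k.

Definition mod5 (R : rcfType) (u : cplx5 R) : R :=
  Num.sqrt (\sum_(j < 5) u j ^+ 2).

(* Main.v *)
Require Import Defs.
From mathcomp Require Import all_boot all_order all_algebra.
From mathcomp Require Import ring.
Import Order.TTheory GRing.Theory Num.Theory.
Local Open Scope ring_scope.

Lemma cs5 (R : rcfType) (a0 a1 a2 a3 a4 b0 b1 b2 b3 b4 : R) :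
  (a0*b0+a1*b1+a2*b2+a3*b3+a4*b4)^+2 <=
  (a0^+2+a1^+2+a2^+2+a3^+2+a4^+2)*(b0^+2+b1^+2+b2^+2+b3^+2+b4^+2).
Proof.
rewrite -subr_ge0.
have -> : (a0^+2+a1^+2+a2^+2+a3^+2+a4^+2)*(b0^+2+b1^+2+b2^+2+b3^+2+b4^+2)
  - (a0*b0+a1*b1+a2*b2+a3*b3+a4*b4)^+2 =
  (a0*b1-a1*b0)^+2 + (a0*b2-a2*b0)^+2 + (a0*b3-a3*b0)^+2 + (a0*b4-a4*b0)^+2
  + (a1*b2-a2*b1)^+2 + (a1*b3-a3*b1)^+2 + (a1*b4-a4*b1)^+2
  + (a2*b3-a3*b2)^+2 + (a2*b4-a4*b2)^+2 + (a3*b4-a4*b3)^+2 by ring.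
by rewrite !addr_ge0 ?sqr_ge0.
Qed.

Lemma key (R : rcfType) (a0 a1 a2 a3 a4 b0 b1 b2 b3 b4 : R) :
  (a0*b0 + a1*b4 + a2*b3 + a3*b2 + a4*b1)^+2
+ (a0*b1 + a1*b0 + a2*b4 + a3*b3 + a4*b2)^+2
+ (a0*b2 + a1*b1 + a2*b0 + a3*b4 + a4*b3)^+2
+ (a0*b3 + a1*b2 + a2*b1 + a3*b0 + a4*b4)^+2
+ (a0*b4 + a1*b3 + a2*b2 + a3*b1 + a4*b0)^+2
 <= 5 * (a0^+2+a1^+2+a2^+2+a3^+2+a4^+2)*(b0^+2+b1^+2+b2^+2+b3^+2+b4^+2).
Proof.
have h0 := @cs5 R a0 a1 a2 a3 a4 b0 b4 b3 b2 b1.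
have h1 := @cs5 R a0 a1 a2 a3 a4 b1 b0 b4 b3 b2.
have h2 := @cs5 R a0 a1 a2 a3 a4 b2 b1 b0 b4 b3.
have h3 := @cs5 R a0 a1 a2 a3 a4 b3 b2 b1 b0 b4.
have h4 := @cs5 R a0 a1 a2 a3 a4 b4 b3 b2 b1 b0.
set A := (a0^+2+a1^+2+a2^+2+a3^+2+a4^+2).
have -> : 5 * A * (b0^+2+b1^+2+b2^+2+b3^+2+b4^+2) =
  A * (b0^+2+b4^+2+b3^+2+b2^+2+b1^+2) + A * (b1^+2+b0^+2+b4^+2+b3^+2+b2^+2)
  + A * (b2^+2+b1^+2+b0^+2+b4^+2+b3^+2) + A * (b3^+2+b2^+2+b1^+2+b0^+2+b4^+2)
  + A * (b4^+2+b3^+2+b2^+2+b1^+2+b0^+2) by ring.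
by rewrite !lerD.
Qed.

Theorem mainTheorem1 (R : rcfType) (u' u'' : cplx5 R) :
  mod5 (mul5 u' u'') <= Num.sqrt 5 * mod5 u' * mod5 u''.
Proof.
rewrite /mod5 /mul5; under eq_bigr do under eq_bigr do rewrite big_mkcond.
rewrite !big_ord_recl !big_ord0 /= /bump /= !add0r !addr0.
set a0 := u' ord0. set a1 := u' (lift ord0 ord0).
set a2 := u' (lift ord0 (lift ord0 ord0)).
set a3 := u' (lift ord0 (lift ord0 (lift ord0 ord0))).
set a4 := u' (lift ord0 (lift ord0 (lift ord0 (lift ord0 ord0)))).
set b0 := u'' ord0. set b1 := u'' (lift ord0 ord0).
set b2 := u'' (lift ord0 (lift ord0 ord0)).
set b3 := u'' (lift ord0 (lift ord0 (lift ord0 ord0))).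
set b4 := u'' (lift ord0 (lift ord0 (lift ord0 (lift ord0 ord0)))).
rewrite -!sqrtrM ?mulr_ge0 ?ler0n ?addr_ge0 ?sqr_ge0 //.
rewrite ler_sqrt ?mulr_ge0 ?ler0n ?addr_ge0 ?sqr_ge0 //.
by rewrite !addrA; apply: key.
Qed.
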